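(* Let $G=(V,E,w)$, $s$, $\tau$ (with $|\tau|\ge 2$) and a budget $b\ge 0$ be as in the context, and suppose that at least one feasible subgraph exists. Then \[ \max_{\substack{S\subseteq G \text{ feasible}}} \textsc{CD}_{\tau,s}(S) \;=\; \max_{\substack{S\in\mathcal{S}(\tau,s)\\ w(S)\le b}} \textsc{CD}_{\tau,s}(S), \] and in particular there is an optimal solution $S^\star\in\mathcal{S}(\tau,s)$ with $w(S^\star)\le b$.
   Context: Let $G=(V,E,w)$ be a finite directed graph with non-negative edge weights $w:E\to\mathbb{R}_{\ge 0}$. A path from $u$ to $v$ in a subgraph $S\subseteq G$ is a sequence $u=v_0\to v_1\to\cdots\to v_k=v$ ($k\ge 0$) with each $v_i\to v_{i+1}$ an edge of $S$; for $i\le j$, $w_P(v_i,v_j)=\sum_{m=i}^{j-1} w(v_m\to v_{m+1})$. A vertex $y$ is reachable from $x$ in $S$ if there is a path from $x$ to $y$ in $S$ (a vertex is reachable from itself). Fix a start vertex $s\in V$ and a finite target set $\tau\subseteq V\setminus\{s\}$ with $|\tau|\ge 2$. The cost of a subgraph $S$ is $w(S)=\sum_{e\in E(S)} w(e)$. For a subgraph $S$ containing $s$ and $\tau$ in which every target is reachable from $s$: for a path $P=v_0\to\cdots\to v_k$ in $S$ with $v_0=s$, $v_k=t\in\tau$, let $\ell$ be the largest index such that some target in $\tau\setminus\{t\}$ is reachable from $v_\ell$ in $S$; the last deceptive point is $l(P,t)=v_\ell$. The unique distance of $t\in\tau$ is $\textsc{U}_S(t)=\min\{w_P(l(P,t),t):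 P \text{ a path in } S \text{ from } s \text{ to } t\}$, and the counterdeceptiveness of $S$ is $\textsc{CD}_{\tau,s}(S)=\min_{t\in\tau}\textsc{U}_S(t)$. Given a budget $b\ge 0$, a subgraph $S\subseteq G$ is feasible if $s\in V(S)$, $\tau\subseteq V(S)$, every target is reachable from $s$ in $S$, and $w(S)\le b$. $\mathcal{S}(\tau,s)$ denotes the set of Steiner trees in $G$ rooted at $s$ with leaves in $\tau$: subgraphs $S\subseteq G$ that are out-arborescences rooted at $s$ (underlying undirected graph a tree, $s$ of in-degree $0$, every other vertex of in-degree $1$), with $\tau\subseteq V(S)$, and such that every leaf (vertex other than $s$ of out-degree $0$) belongs to $\tau$. *)

(* Defs.v *)
From HB Require Import structures.
From mathcomp Require Import all_boot all_order all_algebra.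
From mathcomp Require Import classical_sets reals.
Set Implicit Arguments. Unset Strict Implicit. Unset Printing Implicit Defensive.
Import Order.TTheory GRing.Theory Num.Theory.
Local Open Scope ring_scope.
Local Open Scope classical_set_scope.

(* A directed graph G = (V, E, w): V a finite type, E : {set V * V} the set of
   directed edges (u, v) meaning u -> v, and w : V * V -> R (only its values on E
   matter; non-negativity on E is a hypothesis of the theorem). *)
Section Defs.
Variables (R : realType) (V : finType).

Definition subg := ({set V} * {set (V * V)})%type.

Definition is_subgraph (E : {set V * V}) (S : subg) : bool :=
  (S.2 \subset E) && [forall e in S.2, (e.1 \in S.1) && (e.2 \in S.1)].

Definition edgeS (S : subg) : rel V := fun x y => (x, y) \in S.2.

Definition reach (S : subg) (x y : V) : bool := connect (edgeS S) x y.

Definition cost (w : V * V -> R) (S : subg) : R := \sum_(e in S.2) w e.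

Fixpoint walkw (w : V * V -> R) (p : seq V) : R :=
  match p with
  | x :: ((y :: _) as q) => w (x, y) + walkw w q
  | _ => 0
  end.

(* Paths from s to t in S are lists P = s :: xs with path (edgeS S) s xs and
   last s xs = t. *)
Definition ldp_index (S : subg) (tau : {set V}) (s t : V) (P : seq V) : nat :=
  \max_(i < size P | [exists t' in tau, (t' != t) && reach S (nth s P i) t']) i.

Definition deceptive_suffix_weight (w : V * V -> R) (S : subg) (tau : {set V})
    (s t : V) (P : seq V) : R :=
  walkw w (drop (ldp_index S tau s t P) P).

Definition unique_dist (w : V * V -> R) (S : subg) (tau : {set V}) (s t : V) : R :=
  inf [set deceptive_suffix_weight w S tau s t (s :: xs) |
        xs in [set xs : seq V | path (edgeS S) s xs && (last s xs == t)]].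

Definition CD (w : V * V -> R) (tau : {set V}) (s : V) (S : subg) : R :=
  inf [set unique_dist w S tau s t | t in [set t : V | t \in tau]].

Definition feasible (E : {set V * V}) (w : V * V -> R) (s : V) (tau : {set V})
    (b : R) (S : subg) : Prop :=
  [/\ is_subgraph E S, s \in S.1, tau \subset S.1,
      (forall t, t \in tau -> reach S s t) & cost w S <= b].

Definition uedge (S : subg) : rel V := fun x y => ((x, y) \in S.2) || ((y, x) \in S.2).

Definition uconnected (S : subg) : Prop :=
  forall x y, x \in S.1 -> y \in S.1 -> connect (uedge S) x y.

(* a cycle in the underlying undirected (multi)graph: distinct vertices
   u_0..u_{k-1} (k >= 1), distinct edges e_0..e_{k-1} of S, e_i joining
   u_i and u_{(i+1) mod k} in either orientation *)
Definition ucycle (S : subg) (vs : seq V) (es : seq (V * V)) : bool :=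
  match vs with
  | [::] => false
  | v0 :: _ =>
    [&& size es == size vs, uniq vs, uniq es,
        all (fun e => e \in S.2) es &
        all (fun i => let a := nth v0 vs i in
                      let c := nth v0 vs ((i + 1) %% size vs) in
                      let e := nth (a, c) es i in
                      (e == (a, c)) || (e == (c, a))) (iota 0 (size vs))]
  end.

Definition uacyclic (S : subg) : Prop := forall vs es, ~~ ucycle S vs es.

Definition indeg (S : subg) (v : V) : nat := #|[set e in S.2 | e.2 == v]|.
Definition outdeg (S : subg) (v : V) : nat := #|[set e in S.2 | e.1 == v]|.

(* S in the set of Steiner trees S(tau, s): an out-arborescence of G rooted at s
   (subgraph whose underlying undirected graph is a tree, s has in-degree 0, every
   other vertex in-degree 1) containing tau, all of whose leaves
   (vertices other than s of out-degree 0) are in tau. *)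
Definition steiner_tree (E : {set V * V}) (s : V) (tau : {set V}) (S : subg) : Prop :=
  [/\ is_subgraph E S, s \in S.1, uconnected S & uacyclic S] /\
  [/\ indeg S s = 0%N,
      (forall v, v \in S.1 -> v != s -> indeg S v = 1%N),
      tau \subset S.1 &
      (forall v, v \in S.1 -> v != s -> outdeg S v = 0%N -> v \in tau)].

End Defs.

(* Main.v *)
Require Import Defs.
From HB Require Import structures.
From mathcomp Require Import all_boot all_order all_algebra.
From mathcomp Require Import classical_sets reals.
From mathcomp Require Import zify.
Set Implicit Arguments. Unset Strict Implicit. Unset Printing Implicit Defensive.
Import Order.TTheory GRing.Theory Num.Theory.
Local Open Scope ring_scope.
Local Open Scope classical_set_scope.

Local Notation fsubsetP := fintype.subsetP.
Section A.
Variables (R : realType) (V : finType) (w : V * V -> R).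

Lemma walkw_ge0 (r : rel V) (hr : forall a b, r a b -> 0 <= w (a, b)) x p :
  path r x p -> 0 <= walkw w (x :: p).
Proof.
elim: p x => [|y p IH] x //= /andP[rxy pp].
by rewrite addr_ge0 ?hr // IH.
Qed.

Lemma walkw_dropS (r : rel V) (hr : forall a b, r a b -> 0 <= w (a, b)) x p n :
  path r x p -> walkw w (drop n.+1 (x :: p)) <= walkw w (drop n (x :: p)).
Proof.
elim: p x n => [|y p IH] x n //=.
  by case: n.
move=> /andP[rxy pp]; case: n => [|n].
  by rewrite drop0 /= lerDr hr.
exact: IH.
Qed.

Lemma walkw_drop_le (r : rel V) (hr : forall a b, r a b -> 0 <= w (a, b)) x p i j :
  path r x p -> (j <= i)%N -> walkw w (drop i (x :: p)) <= walkw w (drop j (x :: p)).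
Proof.
move=> pp /subnK <-; elim: (i - j)%N => [|k IH] //.
by rewrite addSn; apply: le_trans IH; apply: walkw_dropS pp.
Qed.

Lemma walkw_drop_ge0 (r : rel V) (hr : forall a b, r a b -> 0 <= w (a, b)) x p n :
  path r x p -> 0 <= walkw w (drop n (x :: p)).
Proof.
elim: p x n => [|y p IH] x n /=; first by case: n.
move=> /andP[rxy pp]; case: n => [|n]; last exact: IH.
by rewrite drop0 /= addr_ge0 ?hr // (IH y 0%N pp).
Qed.

Lemma reach_sub (S T : subg V) x y : T.2 \subset S.2 -> reach T x y -> reach S x y.
Proof.
move=> sub; apply: connect_sub => a b hab; apply: connect1.
by rewrite /edgeS (fsubsetP sub).
Qed.

Lemma ldp_mono (S T : subg V) (tau : {set V}) s t P : T.2 \subset S.2 ->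
  (ldp_index T tau s t P <= ldp_index S tau s t P)%N.
Proof.
move=> sub; rewrite /ldp_index; apply/bigmax_leqP => i /existsP[t' /and3P[t'tau nt r]].
apply: leq_bigmax_cond; apply/existsP; exists t'; rewrite t'tau nt /=.
exact: reach_sub r.
Qed.

Lemma ud_ge0 (E : {set V * V}) (S : subg V) (tau : {set V}) s t :
  (forall e, e \in E -> 0 <= w e) -> S.2 \subset E ->
  lbound [set deceptive_suffix_weight w S tau s t (s :: xs) |
        xs in [set xs : seq V | path (edgeS S) s xs && (last s xs == t)]] 0.
Proof.
move=> wpos sub _ [xs /= /andP[pxs _] <-].
rewrite /deceptive_suffix_weight.
apply: walkw_drop_ge0 pxs => a b hab; apply: wpos; exact: (fsubsetP sub).
Qed.

Lemma ud_mono (E : {set V * V}) (S T : subg V) (tau : {set V}) s t :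
  (forall e, e \in E -> 0 <= w e) -> S.2 \subset E -> T.2 \subset S.2 ->
  reach T s t ->
  unique_dist w S tau s t <= unique_dist w T tau s t.
Proof.
move=> wpos sE sub rt; rewrite /unique_dist.
apply: lb_le_inf.
  case/connectP: rt => p pp lp; exists (deceptive_suffix_weight w T tau s t (s :: p)).
  by exists p => //=; rewrite pp lp eqxx.
move=> _ [xs /= /andP[pxs lxs] <-].
have pS : path (edgeS S) s xs.
  by apply: sub_path pxs => a b; rewrite /edgeS => h; apply: (fsubsetP sub).
apply: le_trans (ge_inf _ _) _.
- exists 0; exact: ud_ge0 wpos sE.
- by exists xs => //=; rewrite pS lxs.
rewrite /deceptive_suffix_weight; apply: walkw_drop_le pS _ => [a b hab|].
  by apply: wpos; apply: (fsubsetP sE).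
exact: ldp_mono.
Qed.

Lemma ud_ge0' (E : {set V * V}) (S : subg V) (tau : {set V}) s t :
  (forall e, e \in E -> 0 <= w e) -> S.2 \subset E -> reach S s t ->
  0 <= unique_dist w S tau s t.
Proof.
move=> wpos sE rt; apply: lb_le_inf; last exact: ud_ge0 wpos sE.
case/connectP: rt => p pp lp; exists (deceptive_suffix_weight w S tau s t (s :: p)).
by exists p => //=; rewrite pp lp eqxx.
Qed.

Lemma CD_mono (E : {set V * V}) (S T : subg V) (tau : {set V}) s :
  (forall e, e \in E -> 0 <= w e) -> S.2 \subset E -> T.2 \subset S.2 ->
  (exists t, t \in tau) ->
  (forall t, t \in tau -> reach T s t) ->
  CD w tau s S <= CD w tau s T.
Proof.
move=> wpos sE sub [t0 t0tau] rt; rewrite /CD.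
apply: lb_le_inf.
  by exists (unique_dist w T tau s t0); exists t0.
move=> _ [t /= ttau <-].
apply: le_trans (ge_inf _ _) (ud_mono _ wpos sE sub (rt t ttau)).
- exists 0 => _ [t' /= t'tau <-]; apply: ud_ge0' wpos sE _.
  exact: reach_sub sub (rt t' t'tau).
- by exists t.
Qed.

End A.

Section B.
Variable (V : finType).

Lemma ucycle_of (S : subg V) (p : V -> V) y k : (0 < k)%N -> iter k p y = y ->
  uniq (traject p y k) ->
  (forall m, (m < k)%N -> (p (iter m p y), iter m p y) \in S.2) ->
  Defs.ucycle S (traject p y k) [seq (p x, x) | x <- traject p y k].
Proof.
case: k => // k' _ ek uv hS.
have hmod : forall m, (m < k'.+1)%N -> p (iter m p y) = iter ((m + 1) %% k'.+1) p y.
  move=> m mk; rewrite addn1 -iterS; case: (ltnP m.+1 k'.+1) => h.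
    by rewrite modn_small.
  have -> : m.+1 = k'.+1 by apply/eqP; rewrite eqn_leq h mk.
  by rewrite modnn ek.
rewrite /Defs.ucycle.
change (y :: traject p (p y) k') with (traject p y k'.+1).
apply/and5P; split.
- by rewrite size_map.
- exact: uv.
- by rewrite map_inj_uniq // => a b [].
- by apply/allP => e /mapP[x /trajectP[m mk ->] ->]; apply: hS.
apply/allP => m; rewrite mem_iota size_traject add0n => /andP[_ mk].
rewrite (nth_map y) ?size_traject // !nth_traject ?ltn_pmod //.
by rewrite hmod // eqxx orbT.
Qed.

Lemma steiner_reach (E : {set V * V}) s (tau : {set V}) (S : subg V) :
  steiner_tree E s tau S -> forall t, t \in S.1 -> reach S s t.
Proof.
move=> [[sub sS _ acyc] [ins in1 _ _]].
move: sub => /andP[_ /forallP sub12].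
pose p x := odflt x [pick u | (u, x) \in S.2].
have ps : p s = s.
  rewrite /p; case: pickP => // u hu.
  move/eqP: ins; rewrite cards_eq0 => /eqP/setP/(_ (u, s)).
  by rewrite !inE hu eqxx.
have Hp : forall x, x \in S.1 -> x != s -> ((p x, x) \in S.2) && (p x \in S.1).
  move=> x xS xs; have /eqP/cards1P[e he] := in1 x xS xs.
  have : e \in [set e0 in S.2 | e0.2 == x] by rewrite he set11.
  rewrite inE => /andP[eS /eqP ex].
  rewrite /p; case: pickP => [u hu|none].
    by rewrite hu /=; have /implyP/(_ hu)/andP[] := sub12 (u, x).
  by move: (none e.1); rewrite -ex -surjective_pairing eS.
have G : forall m x, x \in S.1 -> (iter m p x \in S.1) && reach S (iter m p x) x.
  move=> m x xS; elim: m => [|m /andP[yS ry]]; first by rewrite /= xS /reach connect0.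
  rewrite iterS; set y := iter m p x in yS ry *.
  have [ey|ys] := eqVneq y s; first by rewrite ey ps -ey yS ry.
  have /andP[e pS] := Hp y yS ys.
  by rewrite pS; apply: connect_trans ry; apply: connect1.
move=> t tS.
case: (boolP [exists m : 'I_#|V|.+1, iter m p t == s]).
  by case/existsP => m /eqP <-; case/andP: (G m t tS).
rewrite negb_exists => /forallP hne.
have hn : forall m, (m <= #|V|)%N -> iter m p t != s.
  by move=> m mn; have := hne (Ordinal (n:=#|V|.+1) mn).
have lp : looping p t #|V|.
  apply/negPn; rewrite -looping_uniq; apply/negP => /card_uniqP.
  by rewrite size_traject => h; have := max_card (mem (traject p t #|V|.+1)); rewrite h ltnn.
have exl : exists n, looping p t n by exists #|V|.
case: (ex_minnP exl) => n0 ln0 minl.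
have n0le : (n0 <= #|V|)%N by apply: minl.
case: n0 ln0 minl n0le => [|n1] ln0 minl n0le; first by [].
have un : uniq (traject p t n1.+1).
  rewrite looping_uniq; apply/negP => /minl; by rewrite ltnn.
case/trajectP: (ln0) => i ilt ei.
set y := iter i p t; set k := (n1.+1 - i)%N.
have nik : n1.+1 = (i + k)%N by rewrite subnKC // ltnW.
have ek : iter k p y = y by rewrite /y -iterD addnC -nik -ei.
have uv : uniq (traject p y k).
  by move: un; rewrite nik trajectD cat_uniq => /and3P[].
have kpos : (0 < k)%N by rewrite subn_gt0.
have hS : forall m, (m < k)%N -> (p (iter m p y), iter m p y) \in S.2.
  move=> m mk; rewrite /y -iterD.
  have mle : (m + i <= #|V|)%N.
    by move: n0le mk; rewrite nik; lia.
  by have /andP[] := Hp _ (proj1 (andP (G (m + i)%N t tS))) (hn _ mle).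
by have := acyc (traject p y k) [seq (p x, x) | x <- traject p y k]; rewrite ucycle_of.
Qed.

End B.

Section C.
Variables (V : finType) (E : {set V * V}) (s : V) (tau : {set V}) (S : subg V).
Hypothesis subS : is_subgraph E S.
Hypothesis HrS : forall t, t \in tau -> reach S s t.
Hypothesis tau0 : exists t, t \in tau.

Definition Lay n v := [exists q : n.-tuple V, path (edgeS S) s q && (last s q == v)].

Lemma exP v : exists n, Lay n v || ~~ reach S s v.
Proof.
case: (boolP (reach S s v)) => [/connectP[q pq lq]|]; last by exists 0%N; rewrite orbT.
exists (size q); apply/orP; left; apply/existsP; exists (in_tuple q).
by rewrite /= pq lq eqxx.
Qed.

Definition dd v := ex_minn (exP v).

Lemma dd_min v n : Lay n v -> (dd v <= n)%N.
Proof. by rewrite /dd; case: (ex_minnP (exP v)) => m _ h l; apply: h; rewrite l. Qed.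

Lemma dd_lay v : reach S s v -> Lay (dd v) v.
Proof. by rewrite /dd; case: (ex_minnP (exP v)) => m /orP[//|/negP] h _ /h. Qed.

Lemma par_ex v : reach S s v -> v != s ->
  exists u, ((u, v) \in S.2) && reach S s u && (dd u < dd v)%N.
Proof.
move=> rv vs; case/existsP: (dd_lay rv) => q /andP[pq /eqP lq].
have := size_tuple q; move: pq lq; case: (tval q) => [|x q'] /=.
  by move=> _ e; move: vs; rewrite -e eqxx.
case/lastP: q' => [|q'' y] /=.
  move=> /andP[h _] <- sz; exists s; apply/andP; split; first by apply/andP; split; [exact: h|exact: connect0].
  have : (dd s <= 0)%N by apply: dd_min; apply/existsP; exists [tuple]; rewrite /= eqxx.
  by rewrite -sz /=; lia.
rewrite rcons_path last_rcons => /andP[hx /andP[pq' h]] ey sz.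
subst v; exists (last x q''); apply/andP; split.
  apply/andP; split; first exact: h.
  by apply/connectP; exists (x :: q'') => //=; rewrite hx.
rewrite -sz size_rcons; apply: (@leq_ltn_trans (size (x :: q''))) => //.
apply: dd_min; apply/existsP; exists (in_tuple (x :: q'')); by rewrite /= hx pq' eqxx.
Qed.

Definition par v := [pick u | ((u, v) \in S.2) && reach S s u && (dd u < dd v)%N].
Definition T0E : {set V * V} := finset (fun e : V * V => (e.2 != s) && reach S s e.2 && (par e.2 == Some e.1)).
Definition T0 : subg V := (finset (fun _ => true), T0E).
Definition U : {set V} := finset (fun v => reach S s v && [exists t in tau, reach T0 v t]).
Definition TT : subg V := (U, [set e in T0E | e.2 \in U]).

Lemma f1 e : e \in T0E -> [/\ e \in S.2, reach S s e.1, reach S s e.2 & (dd e.1 < dd e.2)%N].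
Proof.
rewrite inE => /andP[/andP[_ r2] /eqP]; rewrite /par; case: pickP => // u /andP[/andP[h1 h2] h3] [eu].
by rewrite -eu [e]surjective_pairing /= -eu.
Qed.

Lemma f2 v : reach S s v -> v != s -> exists u, par v = Some u /\ (u, v) \in T0E.
Proof.
move=> rv vs; have [u0 hu0] := par_ex rv vs.
have [u pu] : exists u, par v = Some u.
  rewrite /par; case: pickP => [u _|none]; first by exists u.
  by move: (none u0); rewrite hu0.
by exists u; split => //; rewrite inE /= vs rv pu eqxx.
Qed.

Lemma f3 v : reach S s v -> reach T0 s v.
Proof.
move: {2}(dd v) (leqnn (dd v)) => n; elim: n v => [|n IH] v dv rv.
  have [->|vs] := eqVneq v s; first exact: connect0.
  have [u [_ /f1[_ _ _]]] := f2 rv vs; by rewrite /= ltnNge (leq_trans dv).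
have [->|vs] := eqVneq v s; first exact: connect0.
have [u [_ hu]] := f2 rv vs; have [_ ru _ lt] := f1 hu.
apply: connect_trans (IH u _ ru) (connect1 _) => //.
by rewrite -ltnS (leq_trans lt).
Qed.

Lemma sU : s \in U.
Proof.
have [t tt] := tau0; rewrite inE; apply/andP; split; first exact: connect0.
by apply/existsP; exists t; rewrite tt f3 // HrS.
Qed.

Lemma tauU : tau \subset U.
Proof.
apply/fintype.subsetP => t tt; rewrite inE HrS //=; apply/existsP; exists t; rewrite tt.
exact: connect0.
Qed.

Lemma TT2 e : e \in TT.2 -> [/\ e \in T0E, e.1 \in U & e.2 \in U].
Proof.
rewrite inE => /andP[h0 h2]; split => //.
have [_ r1 _ _] := f1 h0.
move: h2; rewrite !inE => /andP[_ /existsP[t /andP[tt rt]]].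
rewrite r1 /=; apply/existsP; exists t; rewrite tt.
apply: connect_trans rt; apply: connect1; by rewrite /edgeS /= -surjective_pairing.
Qed.

Lemma TT2S : TT.2 \subset S.2.
Proof. by apply/fintype.subsetP => e /TT2[/f1[]]. Qed.

Lemma head_uniq a b v : (a, v) \in T0E -> (b, v) \in T0E -> a = b.
Proof.
rewrite !inE /= => /andP[_ /eqP ha] /andP[_ /eqP hb].
by move: ha; rewrite hb => -[->].
Qed.

Lemma fpar v : v \in U -> v != s -> exists u, (u, v) \in TT.2.
Proof.
move=> vU vs; move: (vU); rewrite inE => /andP[rv _]; have [u [_ hu]] := f2 rv vs.
by exists u; rewrite inE hu vU.
Qed.

Lemma f8 v : v \in U -> reach TT s v.
Proof.
move: {2}(dd v) (leqnn (dd v)) => n; elim: n v => [|n IH] v dv vU.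
  have [->|vs] := eqVneq v s; first exact: connect0.
  have [u /[dup] hu /TT2[/f1[_ _ _]]] := fpar vU vs; by rewrite /= ltnNge (leq_trans dv).
have [->|vs] := eqVneq v s; first exact: connect0.
have [u hu] := fpar vU vs; have [h0 uU _] := TT2 hu; have [_ _ _ lt] := f1 h0.
apply: connect_trans (IH u _ uU) (connect1 _) => //.
by rewrite -ltnS (leq_trans lt).
Qed.

Lemma uconn : uconnected TT.
Proof.
move=> x y xU yU.
have hs : forall z, z \in U -> connect (uedge TT) s z.
  move=> z zU; apply: (connect_sub _ (f8 zU)) => a b h; apply: connect1.
  by rewrite /uedge -/(edgeS TT a b) h.
have sym : symmetric (uedge TT) by move=> a b; rewrite /uedge orbC.
by apply: connect_trans (hs y yU); rewrite (sym_connect_sym sym); apply: hs.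
Qed.

Lemma acyc : uacyclic TT.
Proof.
move=> vs es; apply/negP; case: vs => [|v0 vs'] //.
set vs := v0 :: vs'; rewrite /Defs.ucycle -/vs.
case/and5P => /eqP szes uvs ues /allP esT /allP cond.
set k := size vs; have kpos : (0 < k)%N by [].
have dlt : forall e, e \in TT.2 -> (dd e.1 < dd e.2)%N.
  by move=> e /TT2[/f1[]].
have [i _ imax] := @arg_maxnP _ (Ordinal kpos) xpredT (fun j : 'I_k => dd (nth v0 vs j)) isT.
set v := nth v0 vs i.
have dmax : forall x, x \in vs -> (dd x <= dd v)%N.
  by move=> x /(nthP v0)[j jk <-]; apply: (imax (Ordinal jk)).
have C : forall m, (m < k)%N ->
  let e := nth (v0, v0) es m in
  [/\ e \in TT.2, (e == (nth v0 vs m, nth v0 vs ((m + 1) %% k))) ||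
    (e == (nth v0 vs ((m + 1) %% k), nth v0 vs m)) & (m + 1) %% k < k]%N.
  move=> m mk /=; split; last by rewrite ltn_pmod.
    by apply: esT; apply: mem_nth; rewrite szes.
  have := cond m; rewrite mem_iota add0n => /(_ mk).
  by rewrite (set_nth_default (v0, v0)) // szes.
have orient : forall m, (m < k)%N -> nth v0 vs m = v \/ nth v0 vs ((m + 1) %% k) = v ->
  nth (v0, v0) es m = (if nth v0 vs m == v then nth v0 vs ((m + 1) %% k) else nth v0 vs m, v).
  move=> m mk hv; have [eT /orP[] /eqP ee ltk] := C m mk.
  - case: hv => hv.
      have := dlt _ eT; rewrite ee /= hv => h.
      by have := dmax _ (mem_nth v0 ltk); rewrite leqNgt h.
    rewrite ee hv; case: eqP => // h; exfalso.
    by have := dlt _ eT; rewrite ee /= hv h ltnn.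
  - case: hv => hv.
      by rewrite ee hv eqxx.
    have := dlt _ eT; rewrite ee /= hv => h.
    by have := dmax _ (mem_nth v0 mk); rewrite leqNgt h.
set j := ((i + k.-1) %% k)%N.
have jk : (j < k)%N by rewrite ltn_pmod.
have hj : ((j + 1) %% k)%N = i.
  by rewrite /j modnDml -addnA addn1 prednK // modnDr modn_small.
have ei := orient i (ltn_ord i) (or_introl erefl).
have hj' : nth v0 vs ((j + 1) %% k) = v by rewrite hj.
have ej := orient j jk (or_intror hj').
have [eiT _ _] := C i (ltn_ord i); have [ejT _ _] := C j jk.
have eq12 : nth (v0, v0) es i = nth (v0, v0) es j.
  move: eiT ejT; rewrite ei ej => h1 h2.
  have [h1' _ _] := TT2 h1; have [h2' _ _] := TT2 h2.
  by rewrite (head_uniq h1' h2').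
move/eqP: eq12; rewrite nth_uniq ?szes // => /eqP eij.
have := dlt _ eiT; rewrite ei /= eqxx.
have -> : nth v0 vs ((i + 1) %% k) = v by rewrite eij.
by rewrite ltnn.
Qed.

Lemma TT_steiner : steiner_tree E s tau TT.
Proof.
split; split.
- apply/andP; split.
    apply: fintype.subset_trans TT2S _; by case/andP: subS.
  by apply/forallP => e; apply/implyP => /TT2[_ h1 h2]; rewrite h1 h2.
- exact: sU.
- exact: uconn.
- exact: acyc.
- rewrite /indeg; apply/eqP; rewrite cards_eq0; apply/eqP/setP => e.
  rewrite finset.in_set finset.in_set0; apply/negP => /andP[/TT2[h _ _] /eqP es].
  by move: h; rewrite inE es eqxx.
- move=> v vU vs; have [u hu] := fpar vU vs.
  rewrite /indeg; apply/eqP/cards1P; exists (u, v); apply/setP => e.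
  rewrite finset.in_set finset.in_set1; apply/andP/eqP => [[h /eqP ev]|->]; last by split.
  have [h0 _ _] := TT2 h; have [hu0 _ _] := TT2 hu.
  move: h0; rewrite [e]surjective_pairing ev => h0.
  by rewrite (head_uniq h0 hu0).
- exact: tauU.
- move=> v vU vs od; move: (vU); rewrite inE => /andP[rv /existsP[t /andP[tt rt]]].
  have [->|vt] := eqVneq v t; first done.
  case/connectP: rt => [[|u q]] /=; first by move=> _ ev; move: vt; rewrite ev eqxx.
  move=> /andP[h pq] lq.
  have [_ _ ru _] := f1 h.
  have uU : u \in U.
    rewrite inE ru /=; apply/existsP; exists t; rewrite tt.
    by apply/connectP; exists q.
  have hT : (v, u) \in TT.2.
    by rewrite /TT /= finset.in_set; apply/andP; split; [exact: h|exact: uU].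
  move/eqP: od; rewrite cards_eq0 => /eqP/setP/(_ (v, u)).
  by rewrite finset.in_set finset.in_set0 hT eqxx.
Qed.

Lemma TT_reach t : t \in tau -> reach TT s t.
Proof. by move=> tt; apply: f8; apply: (fintype.subsetP tauU). Qed.
End C.

Lemma exists_steiner (V : finType) (E : {set V * V}) s (tau : {set V}) (S : subg V) :
  is_subgraph E S -> (forall t, t \in tau -> reach S s t) -> (exists t, t \in tau) ->
  exists T : subg V, [/\ steiner_tree E s tau T, T.2 \subset S.2 &
    forall t, t \in tau -> reach T s t].
Proof.
move=> h1 h2 h3; exists (TT s tau S); split.
- exact: TT_steiner.
- exact: TT2S.
- by move=> t tt; apply: (TT_reach h1 h2).
Qed.


Lemma sup_max_el (R : realType) (A : set R) x : A x -> (forall y, A y -> y <= x) -> sup A = x.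
Proof.
move=> Ax ub; apply/le_anti/andP; split.
  by apply: ge_sup; [exists x|].
by apply: (ub_le_sup _ Ax); exists x.
Qed.

Lemma cost_sub (R : realType) (V : finType) (E : {set V * V}) (w : V * V -> R) (S T : subg V) :
  (forall e, e \in E -> 0 <= w e) -> S.2 \subset E -> T.2 \subset S.2 -> cost w T <= cost w S.
Proof.
move=> wpos sE sub; rewrite /cost [X in _ <= X](bigID (fun e => e \in T.2)) /=.
rewrite [X in X + _](eq_bigl (fun e => e \in T.2)); last first.
  move=> e /=; rewrite andbC; case: (boolP (e \in T.2)) => //= h.
  by rewrite (fintype.subsetP sub).
rewrite lerDl; apply: sumr_ge0 => e /andP[h _]; apply: wpos.
exact: (fintype.subsetP sE).
Qed.

Theorem theorem1 (R : realType) (V : finType) (E : {set V * V}) (w : V * V -> R)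
    (s : V) (tau : {set V}) (b : R) :
  (forall e, e \in E -> 0 <= w e) ->
  s \notin tau -> (1 < #|tau|)%N -> 0 <= b ->
  (exists S : subg V, feasible E w s tau b S) ->
  sup [set CD w tau s S | S in [set S : subg V | feasible E w s tau b S]]
    = sup [set CD w tau s S |
           S in [set S : subg V | steiner_tree E s tau S /\ cost w S <= b]]
  /\ exists Sstar : subg V,
       [/\ steiner_tree E s tau Sstar, cost w Sstar <= b &
           CD w tau s Sstar
             = sup [set CD w tau s S | S in [set S : subg V | feasible E w s tau b S]]].
Proof.
move=> wpos stau ctau b0 [S1 fS1].
pose feasb (S : subg V) := [&& is_subgraph E S, s \in S.1, tau \subset S.1,
   [forall t in tau, reach S s t] & cost w S <= b].
have feasP : forall S, feasible E w s tau b S <-> feasb S.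
  move=> S; split.
    case=> h1 h2 h3 h4 h5; rewrite /feasb h1 h2 h3 h5 andbT /=.
    by apply/forall_inP.
  by case/and5P => h1 h2 h3 /forall_inP h4 h5; split.
have [S0 fS0 maxS0] : exists2 S0, feasb S0 & forall S, feasb S -> CD w tau s S <= CD w tau s S0.
  by case: (@arg_maxP _ _ _ S1 feasb (CD w tau s) (proj1 (feasP S1) fS1)) => S0 h1 h2; exists S0.
have tau0 : exists t, t \in tau by apply/card_gt0P; apply: ltnW.
have [h1 h2 h3 h4 h5] := proj2 (feasP S0) fS0.
have sE : S0.2 \subset E by case/andP: h1.
have [T [stT subT rT]] := exists_steiner h1 h4 tau0.
have ste_feas : forall T', steiner_tree E s tau T' -> cost w T' <= b -> feasb T'.
  move=> T' st cT; apply/feasP; have st' := st.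
  case: st => [[g1 g2 _ _] [_ _ g3 _]]; split => // t tt.
  exact: (steiner_reach st' (fintype.subsetP g3 t tt)).
have cT : cost w T <= b := le_trans (cost_sub wpos sE subT) h5.
have eqT : CD w tau s T = CD w tau s S0.
  apply/le_anti/andP; split; first exact: maxS0 (ste_feas T stT cT).
  exact: (CD_mono wpos sE subT tau0 rT).
have supF : sup [set CD w tau s S | S in [set S : subg V | feasible E w s tau b S]] = CD w tau s S0.
  apply: sup_max_el; first by exists S0 => //=; apply/feasP.
  by move=> _ [S /= /feasP fS <-]; apply: maxS0.
have supS : sup [set CD w tau s S |
           S in [set S : subg V | steiner_tree E s tau S /\ cost w S <= b]] = CD w tau s S0.
  apply: sup_max_el; first by exists T => //=.
  move=> _ [S /= [stS cS] <-]; exact: maxS0 (ste_feas S stS cS).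
split; first by rewrite supF supS.
by exists T; split => //; rewrite supF.
Qed.
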